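(* Let $n\ge 1$ and $m\ge 2$ be integers with $m\nmid n$, let $\ell=\lfloor n/m\rfloor$, and let $k\ge 1$. Then the $k$-fold composition $\chi_{n,m}^k$ satisfies $$\chi_{n,m}^k=\sum_{j=0}^{\min\{k,\ell\}}a_j\theta_{m,j},$$ where $a_j\in\mathbb{F}_2$ and $a_j=1$ if and only if $j\preceq k$.
   Context: Indices of coordinates of $x\in\mathbb{F}_2^n$ are taken modulo $n$. $\chi_{n,m}\colon\mathbb{F}_2^n\to\mathbb{F}_2^n$ is given by $\chi_{n,m}(x)=y$ with $y_i=x_i+x_{i+m}(x_{i+m-1}+1)\cdots(x_{i+1}+1)$. For a nonnegative integer $k$, $\theta_{m,k}(x)=y$ with $y_i=x_{i+mk}\prod_{1\le j\le mk-1,\ m\nmid j}(x_{i+j}+1)$; $\theta_{m,0}$ is the identity map. Sums of maps are pointwise sums. For nonnegative integers $j,k$ with binary expansions $j=\sum_i j_i2^i$, $k=\sum_i k_i2^i$ ($j_i,k_i\in\{0,1\}$), $j\preceq k$ means $j_i\le k_i$ for all $i$. *)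

(* Defs.v *)
From HB Require Import structures.
From mathcomp Require Import all_boot all_order all_algebra.
Set Implicit Arguments. Unset Strict Implicit. Unset Printing Implicit Defensive.
Import GRing.Theory.
Local Open Scope ring_scope.

(* Vectors of F_2^n are row vectors 'rV['F_2]_n; coordinate i is x 0 i. *)

Lemma ord_pos n (i : 'I_n) : (0 < n)%N.
Proof. by case: i => [[|k]] /= H; apply: leq_ltn_trans H. Qed.

Definition sh n (i : 'I_n) (k : nat) : 'I_n :=
  Ordinal (ltn_pmod (i + k)%N (ord_pos i)).

Definition chi (n m : nat) (x : 'rV['F_2]_n) : 'rV['F_2]_n :=
  \row_i (x 0 i + x 0 (sh i m) * \prod_(1 <= j < m) (x 0 (sh i j) + 1)).

Definition theta (n m k : nat) (x : 'rV['F_2]_n) : 'rV['F_2]_n :=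
  if k is 0 then x else
  \row_i (x 0 (sh i (m * k)) *
          \prod_(1 <= j < m * k | ~~ (m %| j)%N) (x 0 (sh i j) + 1)).

Definition bin_preceq (j k : nat) : Prop :=
  forall i : nat, ((j %/ 2 ^ i) %% 2 <= (k %/ 2 ^ i) %% 2)%N.

(* Main.v *)
Require Import Defs.
From HB Require Import structures.
From mathcomp Require Import all_boot all_order all_algebra.
From mathcomp Require Import zify.
Set Implicit Arguments. Unset Strict Implicit.
Import GRing.Theory.
Local Open Scope ring_scope.
Lemma bin_even a : forall c,
  odd 'C(a.*2, c.*2) = odd 'C(a,c) /\ odd 'C(a.*2, (c.*2).+1) = false.
Proof.
elim: a => [|a IH] c.
  by case: c => [|c] //=; rewrite !bin0n.
rewrite doubleS; split.
  case: c => [|c]; first by rewrite !bin0.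
  rewrite doubleS !binS !oddD.
  have [h1 h2] := IH c; have [h3 h4] := IH c.+1; move: h3 h4; rewrite doubleS => h3 h4.
  by rewrite h1 h2 h3; case: (odd 'C(a, c.+1)); case: (odd 'C(a,c)).
rewrite !binS !oddD.
case: c => [|c].
  by rewrite !bin0 (IH 0).2.
rewrite doubleS binS oddD.
have [h3 h4] := IH c.+1; move: h3 h4; rewrite doubleS => h3 h4.
by rewrite h3 h4 (IH c).2; case: (odd 'C(a, c.+1)).
Qed.

Lemma bin_bits (a c : nat) (b d : bool) :
  odd 'C(b + a.*2, d + c.*2) = odd 'C(a, c) && (d <= b)%N.
Proof.
case: b; case: d => /=; rewrite ?add0n ?add1n ?andbT ?andbF.
- by rewrite binS oddD (bin_even a c).1 (bin_even a c).2.
- case: c => [|c]; first by rewrite !bin0.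
  rewrite doubleS binS oddD; have := (bin_even a c.+1).1; rewrite doubleS => ->.
  by rewrite (bin_even a c).2 addbF.
- exact: (bin_even a c).2.
- exact: (bin_even a c).1.
Qed.

Lemma bin_step k j : odd 'C(k, j) = odd 'C(k./2, j./2) && (odd j <= odd k)%N.
Proof. by rewrite -{1}[k]odd_double_half -{1}[j]odd_double_half bin_bits. Qed.

Lemma bp_step j k : bin_preceq j k <-> (odd j <= odd k)%N /\ bin_preceq j./2 k./2.
Proof.
have E : forall x i, (x %/ 2 ^ i.+1 = x./2 %/ 2 ^ i)%N.
  by move=> x i; rewrite expnS divnMA divn2.
split.
  move=> H; split; first by have := H 0%N; rewrite expn0 !divn1 !modn2.
  by move=> i; have := H i.+1; rewrite !E.
case=> h1 h2 [|i]; first by rewrite expn0 !divn1 !modn2.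
by rewrite !E.
Qed.

Lemma lucas j : forall k, odd 'C(k, j) = true <-> bin_preceq j k.
Proof.
elim/ltn_ind: j => j IH k.
case: (posnP j) => [->|jp].
  by rewrite bin0; split => // _ i; rewrite div0n mod0n.
rewrite bin_step bp_step -(IH j./2); last first.
  by rewrite -divn2 ltn_Pdiv.
by case: (odd 'C(_,_)); case: (_ <= _)%N; split => //; case.
Qed.
Lemma F2c (a : 'F_2) : a = 0 \/ a = 1.
Proof. case: a => [[|[|k]] Hk]; [left|right|]; try by apply/val_inj. by []. Qed.
Lemma F2_11 : (1 + 1 : 'F_2) = 0. Proof. by apply/val_inj. Qed.
Lemma F2_10 : (1 : 'F_2) != 0. Proof. by []. Qed.
Lemma F2_nat (n:nat) : (n%:R : 'F_2) = (odd n)%:R.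
Proof.
elim: n => [|n IH] //. rewrite mulrS IH /=.
by case: (odd n) => /=; rewrite ?F2_11 ?addr0.
Qed.
Lemma F2_mul1 (a b : 'F_2) : a * b = 1 -> a = 1 /\ b = 1.
Proof. by case: (F2c a) => ->; case: (F2c b) => ->; rewrite ?mul0r ?mulr0 ?mulr1 // => /eqP; rewrite eq_sym (negbTE F2_10). Qed.

Definition Pw (m : nat) (X : nat -> 'F_2) (p N : nat) : 'F_2 :=
  \prod_(1 <= t < N | ~~ (m %| t)%N) (X (p + t)%N + 1).
Definition Th (m j : nat) (X : nat -> 'F_2) (p : nat) : 'F_2 :=
  X (p + m * j)%N * Pw m X p (m * j).

Lemma Pw_all0 m X p N :
  (forall t, (1 <= t < N)%N -> ~~ (m %| t)%N -> X (p + t)%N = 0) -> Pw m X p N = 1.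
Proof.
move=> H; rewrite /Pw big_nat_cond; apply: big1 => t /andP[/H h1 h2].
by rewrite h1 // add0r.
Qed.

Lemma Pw_has1 m X p N t :
  (1 <= t < N)%N -> ~~ (m %| t)%N -> X (p + t)%N = 1 -> Pw m X p N = 0.
Proof.
move=> ht hm hX; rewrite /Pw big_mkcond (bigD1_seq t) /= ?iota_uniq ?mem_index_iota //.
by rewrite hm hX F2_11 mul0r.
Qed.

Lemma Pw1_0 m X p N t :
  Pw m X p N = 1 -> (1 <= t < N)%N -> ~~ (m %| t)%N -> X (p + t)%N = 0.
Proof.
move=> H ht hm; case: (F2c (X (p+t)%N)) => // h.
by move: H; rewrite (Pw_has1 ht hm h) => /eqP; rewrite eq_sym (negbTE F2_10).
Qed.

Lemma Pw_split m X p N : (0 < m)%N ->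
  Pw m X p (m + N) = Pw m X p m * Pw m X (p + m) N.
Proof.
move=> m0; rewrite /Pw (@big_cat_nat _ _ _ m) //=; last by lia.
congr (_ * _).
rewrite -{1}(add0n m) big_addn.
rewrite addKn.
case: N => [|N]; first by rewrite !big_geq.
rewrite big_ltn_cond //=.
rewrite add0n dvdnn /=.
apply: eq_big => t.
  by rewrite dvdn_addl.
by move=> _; rewrite -addnA (addnC t).
Qed.

Lemma nondvd_lt m t : (0 < t < m)%N -> ~~ (m %| t)%N.
Proof. move=> /andP[h1 h2]; apply/negP => /(dvdn_leq h1); lia. Qed.

Lemma key m X Y (a : nat -> 'F_2) L : (0 < m)%N -> a 0%N = 1 ->
  (forall p, Y p = \sum_(j < L.+1) a j * Th m j X p) ->
  forall i, Th m 1 Y i = \sum_(j < L.+1) a j * Th m j.+1 X i.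
Proof.
move=> m0 a0 HY i.
rewrite {1}/Th muln1.
case: (boolP [exists t : 'I_m, (0 < t)%N && (X (i + t)%N == 1)]).
- case/existsP => [[t0 /= ht0m]] /andP[ht0 /eqP hX].
  have nd0 : ~~ (m %| t0)%N by apply: nondvd_lt; rewrite ht0 ht0m.
  have -> : \sum_(j < L.+1) a j * Th m j.+1 X i = 0.
    apply: big1 => j _; rewrite /Th (@Pw_has1 _ _ _ _ t0) ?mulr0 //.
    have : (m <= m * j.+1)%N by rewrite leq_pmulr.
    lia.
  case: (boolP [exists j : 'I_L.+1, (0 < j)%N && (Th m j X (i + t0) == 1)]).
  + case/existsP => [[j /= hjL]] /andP[hj0 /eqP].
    rewrite /Th => /F2_mul1 [hXj hPj].
    have Ej : (m * j = m * j.-1 + m)%N by rewrite -mulnSr prednK.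
    have -> : Y (i + m)%N = 0.
      rewrite HY; apply: big1 => j' _; rewrite /Th.
      have [lt|ge] := ltnP (m * j') (t0 + m * j - m).
        have E : (i + m + m * j' = i + t0 + (m + m * j' - t0))%N by lia.
        rewrite E (Pw1_0 hPj) ?mul0r ?mulr0 //; first by lia.
        rewrite dvdn_subr; [by []|lia|].
        by rewrite dvdn_add ?dvdnn // dvdn_mulr.
      have nd1 : ~~ (m %| t0 + m * j - m)%N.
        have -> : (t0 + m * j - m = t0 + m * j.-1)%N by rewrite Ej addnA addnK.
        by rewrite dvdn_addl // dvdn_mulr.
      have ne : (m * j' != t0 + m * j - m)%N.
        by apply: contraNneq nd1 => <-; rewrite dvdn_mulr.
      rewrite (@Pw_has1 _ _ _ _ (t0 + m * j - m)) ?mulr0 //.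
        by move: ne ge; lia.
      have -> : (i + m + (t0 + m * j - m) = i + t0 + m * j)%N by lia.
      by [].
    by rewrite mul0r.
  + rewrite negb_exists => /forallP H.
    have HY1 : Y (i + t0)%N = 1.
      rewrite HY big_ord_recl /= big1 ?addr0.
        by rewrite a0 /Th muln0 addn0 hX mul1r /Pw big_geq // mulr1.
      move=> j _; have := H (lift ord0 j); rewrite /= /bump /= add1n /=.
      by case: (F2c (Th m j.+1 X (i + t0)%N)) => -> //; rewrite ?mulr0 ?eqxx.
    by rewrite (@Pw_has1 _ _ _ _ t0) ?mulr0 //; rewrite ht0 ht0m.
- rewrite negb_exists => /forallP H0.
  have HX0 : forall t, (0 < t < m)%N -> X (i + t)%N = 0.
    move=> t /andP[h1 h2]; have := H0 (Ordinal h2); rewrite /= h1 /=.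
    by case: (F2c (X (i+t)%N)) => -> //; rewrite eqxx.
  have Pm : Pw m X i m = 1 by apply: Pw_all0 => t ht _; apply: HX0.
  have A1 : forall j, Th m j X (i + m)%N = Th m j.+1 X i.
    by move=> j; rewrite /Th mulnS Pw_split // Pm mul1r addnA.
  have EY : Y (i + m)%N = \sum_(j < L.+1) a j * Th m j.+1 X i.
    by rewrite HY; apply: eq_bigr => j _; rewrite A1.
  rewrite EY.
  case: (F2c (\sum_(j < L.+1) a j * Th m j.+1 X i)) => Hs; first by rewrite Hs mul0r.
  rewrite Hs; suff -> : Pw m Y i m = 1 by rewrite mulr1.
  have [j hj] : exists j : 'I_L.+1, Th m j.+1 X i = 1.
    case: (boolP [exists j : 'I_L.+1, Th m j.+1 X i == 1]) => [/existsP[j /eqP hj]|]; first by exists j.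
    rewrite negb_exists => /forallP Hn; move: Hs; rewrite big1 => [/eqP|j _].
      by rewrite eq_sym (negbTE F2_10).
    by case: (F2c (Th m j.+1 X i)) (Hn j) => -> //; rewrite ?mulr0 ?eqxx.
  move: hj; rewrite /Th => /F2_mul1 [hXj hPj].
  apply: Pw_all0 => t /andP[ht1 ht2] _.
  rewrite HY; apply: big1 => j' _; rewrite /Th.
  have ndt : ~~ (m %| t)%N by apply: nondvd_lt; rewrite ht1 ht2.
  have [lt|ge] := ltnP (t + m * j') (m * j.+1).
    rewrite -addnA (Pw1_0 hPj) ?mul0r ?mulr0 //; first by lia.
    by rewrite dvdn_addl // dvdn_mulr.
  have ne : (m * j.+1 != t + m * j')%N.
    apply: contraNneq ndt => E.
    by rewrite -(@dvdn_addl (m * j') m t) ?dvdn_mulr // -E dvdn_mulr.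
  have nd1 : ~~ (m %| m * j.+1 - t)%N.
    by rewrite dvdn_subr ?dvdn_mulr //; lia.
  rewrite (@Pw_has1 _ _ _ _ (m * j.+1 - t)) ?mulr0 //.
    by move: ne ge; lia.
  by have -> : (i + t + (m * j.+1 - t) = i + m * j.+1)%N by lia.
Qed.

Section Rows.
Variables (n m : nat) (n0 : (0 < n)%N) (m0 : (0 < m)%N).

Definition w (x : 'rV['F_2]_n) (p : nat) : 'F_2 := x 0 (Ordinal (ltn_pmod p n0)).

Lemma w_modD (x : 'rV['F_2]_n) p s : w x (p %% n + s)%N = w x (p + s)%N.
Proof. by rewrite /w; congr (x 0 _); apply/val_inj => /=; rewrite modnDml. Qed.

Lemma Th_mod j (x : 'rV['F_2]_n) p : Th m j (w x) (p %% n) = Th m j (w x) p.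
Proof.
rewrite /Th /Pw w_modD; congr (_ * _); apply: eq_bigr => t _.
by rewrite w_modD.
Qed.

Lemma theta_w j (x : 'rV['F_2]_n) (i : 'I_n) : theta m j x 0 i = Th m j (w x) i.
Proof.
case: j => [|j].
  rewrite /Th /Pw muln0 addn0 big_geq // mulr1 /w /=.
  by congr (x 0 _); apply/val_inj => /=; rewrite modn_small.
rewrite /theta mxE /Th /Pw; congr (_ * _).
  by rewrite /w; congr (x 0 _); apply/val_inj.
apply: eq_bigr => t _; rewrite /w; congr (x 0 _ + 1); exact/val_inj.
Qed.

Lemma chi_theta (x : 'rV['F_2]_n) : chi m x = x + theta m 1 x.
Proof.
apply/rowP => i; rewrite !mxE /= muln1; congr (_ + _ * _).
rewrite [RHS]big_nat_cond [LHS]big_nat_cond; apply: eq_bigl => t.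
by case: (boolP (1 <= t < m)%N) => h //=; rewrite nondvd_lt ?andbT.
Qed.

Lemma key_rows (a : nat -> 'F_2) L (x : 'rV['F_2]_n) : a 0%N = 1 ->
  theta m 1 (\sum_(j < L.+1) a j *: theta m j x) =
  \sum_(j < L.+1) a j *: theta m j.+1 x.
Proof.
move=> a0; apply/rowP => i; rewrite theta_w summxE.
have HY : forall p, w (\sum_(j < L.+1) a j *: theta m j x) p =
                   \sum_(j < L.+1) a j * Th m j (w x) p.
  move=> p; rewrite /w summxE; apply: eq_bigr => j _.
  by rewrite mxE theta_w /= Th_mod.
rewrite (key m0 a0 HY); apply: eq_bigr => j _.
by rewrite mxE theta_w.
Qed.

Lemma iter_chi k N (x : 'rV['F_2]_n) : (k < N)%N ->
  iter k (chi m) x = \sum_(j < N) ('C(k, j))%:R *: theta m j x.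
Proof.
elim: k N => [|k IH] [|N] //= hk.
  rewrite big_ord_recl big1 ?addr0 /=; first by rewrite scale1r.
  by move=> j _; rewrite /bump /= bin0n scale0r.
have hkN : (k < N)%N by [].
case: N hk hkN => [|L] // hk hkN.
rewrite chi_theta (IH L.+1) // (@key_rows (fun j => ('C(k, j))%:R) L x) ?bin0 //.
rewrite -(IH L.+1) // (IH L.+2); last by apply: ltnW.
rewrite big_ord_recl [in RHS]big_ord_recl !bin0 -addrA; congr (_ + _).
rewrite -big_split /=; apply: eq_bigr => j _.
by rewrite /bump /= add1n binS natrD scalerDl.
Qed.

Lemma theta0 j (x : 'rV['F_2]_n) : (n %/ m < j)%N -> ~~ (m %| n)%N -> theta m j x = 0.
Proof.
move=> hj hnd; apply/rowP => i; rewrite theta_w mxE.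
have hmj : (n < m * j)%N.
  have := ltn_ceil n m0; move=> h; apply: (leq_trans h).
  by rewrite mulnC leq_mul2l hj orbT.
set t := (m * j - n)%N.
have ht : (1 <= t < m * j)%N by rewrite /t; lia.
have hnt : ~~ (m %| t)%N by rewrite /t dvdn_subr ?dvdn_mulr //; lia.
have E : w x (i + m * j)%N = w x (i + t)%N.
  rewrite /w; congr (x 0 _); apply/val_inj => /=.
  have -> : (i + m * j = (i + t) + n)%N by rewrite /t; lia.
  by rewrite modnDr.
rewrite /Th E; case: (F2c (w x (i + t)%N)) => h; first by rewrite h mul0r.
by rewrite (Pw_has1 ht hnt h) mulr0.
Qed.

End Rows.

Lemma sum_trunc (V : zmodType) (F : nat -> V) M N : (M <= N)%N ->
  (forall j, (M <= j < N)%N -> F j = 0) ->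
  \sum_(j < N) F j = \sum_(j < M) F j.
Proof.
move=> MN H; rewrite (big_ord_widen N F MN) [RHS]big_mkcond.
apply: eq_bigr => j _; case: ifP => // h; apply: H.
by rewrite ltn_ord andbT leqNgt h.
Qed.

Theorem theorem4 (n m k : nat) :
  (1 <= n)%N -> (2 <= m)%N -> ~~ (m %| n)%N -> (1 <= k)%N ->
  exists a : nat -> 'F_2,
    (forall j : nat, (j <= minn k (n %/ m))%N -> (a j = 1 <-> bin_preceq j k)) /\
    forall x : 'rV['F_2]_n,
      iter k (chi m) x =
      \sum_(j < (minn k (n %/ m)).+1) a j *: theta m j x.
Proof.
move=> hn hm hnd hk.
have m0 : (0 < m)%N by lia.
exists (fun j => ('C(k, j))%:R); split.
  move=> j _; rewrite F2_nat -lucas.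
  by case: (odd _); split => // /eqP; rewrite eq_sym (negbTE F2_10).
move=> x; rewrite (iter_chi hn m0 x (ltnSn k)).
apply: (@sum_trunc _ (fun j => ('C(k, j))%:R *: theta m j x)).
  by rewrite ltnS geq_minl.
move=> j /andP[h1 h2].
case: (leqP j k) => hjk.
  rewrite (theta0 hn m0) ?scaler0 //.
  move: h1; rewrite gtn_min => /orP[h|h] //; by rewrite ltnNge hjk in h.
by move: h2; rewrite ltnS leqNgt hjk.
Qed.
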